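(* Let $k\ge2$ and $t\ge1$ be integers. Let $K$ be the number of inner blocks of $0$s of length at least two in the binary expansion of $t$, and $L$ the number of maximal blocks of $1$s of length $\le k$ in the binary expansion of $t$. Then \[m(t)\ge 4+K+\max\Bigl(0,\Bigl\lfloor\frac{L-2K-1}{2}\Bigr\rfloor\Bigr)\frac{k}{2^k}.\] In particular, for all integers $D_0\ge2$ and $k\ge2$ there exists a bound $B=B(D_0,k)$ such that for all integers $t\ge1$ with $D(t)\le D_0$, the number of inner blocks of $0$s of length $\ge2$ in $t$ and the number of maximal blocks of $1$s of length $\le k$ in $t$ are both bounded by $B$.
   Context: $s(n)$ is the number of $1$s in the binary expansion of $n\ge0$; $\delta(j,t)=\lim_{N\to\infty}\frac1N|\{0\le n<N: s(n+t)-s(n)=j\}|$ for $j\in\mathbb Z$, a probability distribution on $\mathbb Z$, and $\kappa_j(t)$ denotes its $j$-th cumulant ($\log\sum_k\delta(k,t)e^{2\pi ik\vartheta}=\sum_{j\ge0}\frac{\kappa_j(t)}{j!}(2\pi i\vartheta)^j$ near $\vartheta=0$). Set $D(t)=\kappa_2(t)-\kappa_3(t)/3$ and $m(t)=\min(D(t),D(t+1))$. A maximal block of $1$s is a maximal run of consecutive binary digits equal to $1$; its length is the number of digits. An inner block of $0$s is a maximal run of consecutive binary digits equal to $0$ that is bordered by a digit $1$ on both sides (so trailing zeros at the least significant end are not inner blocks). *)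

(* Defs.v *)
From Stdlib Require Import Reals ZArith Arith List Lia Bool.
From Coquelicot Require Import Coquelicot.
Import ListNotations.
Open Scope R_scope.

(* s(n): number of 1s in the binary expansion of n
   (bits beyond position n are always 0 since n < 2^(n+1)). *)
Definition s (n : nat) : nat :=
  length (filter (Nat.testbit n) (seq 0 (S n))).

Definition cnt (j : Z) (t N : nat) : nat :=
  length (filter (fun n => Z.eqb (Z.of_nat (s (n + t)) - Z.of_nat (s n)) j)
                 (seq 0 N)).

Definition delta (j : Z) (t : nat) : R :=
  Lim_seq (fun N => INR (cnt j t N) / INR N).

Definition moment (m t : nat) : R :=
  Series (fun k => delta (Z.of_nat k) t * (INR k) ^ m)
  + Series (fun k => delta (- Z.of_nat (S k)) t * (- INR (S k)) ^ m).

(* Cumulants via the standard moment-cumulant recursion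
   kappa_n = M_n - sum_{m=1}^{n-1} C(n-1,m-1) kappa_m M_{n-m}  (n >= 1),
   kappa_0 = log M_0 = 0, which is the coefficient identity of
   log (sum_k delta(k,t) e^{k z}) = sum_j kappa_j z^j / j!. *)
Fixpoint kappa_aux (fuel : nat) (n t : nat) : R :=
  match fuel with
  | O => 0
  | S f =>
    match n with
    | O => 0
    | S n' =>
      moment n t -
      fold_right Rplus 0
        (map (fun m => INR (Nat.div (fact n') (fact (m - 1) * fact (n' - (m - 1))))
                        * kappa_aux f m t * moment (n - m) t)
             (seq 1 n'))
    end
  end.

Definition kappa (j t : nat) : R := kappa_aux (S j) j t.

Definition D (t : nat) : R := kappa 2 t - kappa 3 t / 3.
Definition mD (t : nat) : R := Rmin (D t) (D (t + 1)).

(* binary digits of t, least significant first (no leading zeros for t >= 1) *)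
Definition bits (t : nat) : list bool :=
  map (Nat.testbit t) (seq 0 (S (Nat.log2 t))).

Fixpoint rle (l : list bool) : list (bool * nat) :=
  match l with
  | [] => []
  | b :: l' =>
    match rle l' with
    | (c, n) :: r => if Bool.eqb b c then (c, S n) :: r else (b, 1%nat) :: (c, n) :: r
    | [] => [(b, 1%nat)]
    end
  end.

Definition runs (t : nat) : list (bool * nat) := rle (bits t).

(* K(t): number of inner blocks of 0s (bordered by 1s on both sides, i.e.
   neither the first nor the last run) of length >= 2 *)
Definition innerZeroBlocks2 (t : nat) : nat :=
  length (filter (fun p => negb (fst p) && Nat.leb 2 (snd p))
                 (removelast (tl (runs t)))).

Definition oneBlocksLe (k t : nat) : nat :=
  length (filter (fun p => fst p && Nat.leb (snd p) k) (runs t)).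

(* Main.v *)
Require Import Defs.
From Stdlib Require Import Reals ZArith Arith List Lia Lra Bool Psatz.
From Coquelicot Require Import Coquelicot.
Import ListNotations.
Import Defs.
Open Scope R_scope.

Lemma filter_len_map_S (f : nat -> bool) (l : list nat) :
  length (filter f (map S l)) = length (filter (fun i => f (S i)) l).
Proof. induction l as [|a l IH]; simpl; auto. destruct (f (S a)); simpl; auto. Qed.

Lemma filter_len_allfalse (f : nat -> bool) (l : list nat) :
  (forall i, In i l -> f i = false) -> length (filter f l) = 0%nat.
Proof.
  induction l as [|a l IH]; simpl; intros H; auto.
  rewrite (H a (or_introl eq_refl)). apply IH. intros; apply H; auto.
Qed.

Lemma s_ext (n M : nat) : (S n <= M)%nat ->
  length (filter (Nat.testbit n) (seq 0 M)) = s n.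
Proof.
  intros HM. unfold s.
  replace M with (S n + (M - S n))%nat by lia.
  rewrite seq_app, filter_app, length_app.
  rewrite (filter_len_allfalse _ (seq (0 + S n) (M - S n))). lia.
  intros i Hi. apply in_seq in Hi. apply Nat.bits_above_log2.
  pose proof (Nat.log2_le_lin n). lia.
Qed.

Lemma seq0S (m : nat) : seq 0 (S m) = 0%nat :: map S (seq 0 m).
Proof. simpl. f_equal. symmetry. apply seq_shift. Qed.

Lemma s_double (n : nat) : s (2 * n) = s n.
Proof.
  destruct n as [|n]. reflexivity.
  unfold s at 1. rewrite seq0S. cbn [filter].
  rewrite Nat.testbit_even_0. rewrite filter_len_map_S.
  rewrite (filter_ext (fun i => Nat.testbit (2 * S n) (S i)) (Nat.testbit (S n))).
  2:{ intros i. apply Nat.testbit_even_succ; lia. }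
  apply s_ext. lia.
Qed.

Lemma s_double1 (n : nat) : s (2 * n + 1) = S (s n).
Proof.
  unfold s at 1. replace (S (2 * n + 1)) with (S (2 * n + 1)) by reflexivity.
  rewrite seq0S. cbn [filter].
  rewrite Nat.testbit_odd_0. cbn [length]. f_equal. rewrite filter_len_map_S.
  rewrite (filter_ext (fun i => Nat.testbit (2 * n + 1) (S i)) (Nat.testbit n)).
  2:{ intros i. apply Nat.testbit_odd_succ; lia. }
  apply s_ext. lia.
Qed.

Definition ind (j : Z) (t n : nat) : nat :=
  if Z.eqb (Z.of_nat (s (n + t)) - Z.of_nat (s n)) j then 1%nat else 0%nat.

Lemma cnt_S j t N : cnt j t (S N) = (cnt j t N + ind j t N)%nat.
Proof.
  unfold cnt, ind. rewrite seq_S, filter_app, length_app. simpl.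
  destruct (Z.eqb _ j); simpl; lia.
Qed.

Lemma cnt_0 j t : cnt j t 0 = 0%nat.
Proof. reflexivity. Qed.

Lemma ind_even_even j u m : ind j (2 * u) (2 * m) = ind j u m.
Proof.
  unfold ind. replace (2 * m + 2 * u)%nat with (2 * (m + u))%nat by lia.
  rewrite !s_double. reflexivity.
Qed.

Lemma ind_even_odd j u m : ind j (2 * u) (2 * m + 1) = ind j u m.
Proof.
  unfold ind. replace (2 * m + 1 + 2 * u)%nat with (2 * (m + u) + 1)%nat by lia.
  rewrite !s_double1.
  destruct (Z.eqb_spec (Z.of_nat (S (s (m + u))) - Z.of_nat (S (s m))) j);
  destruct (Z.eqb_spec (Z.of_nat (s (m + u)) - Z.of_nat (s m)) j); auto; lia.
Qed.

Lemma ind_odd_even j u m : ind j (2 * u + 1) (2 * m) = ind (j - 1) u m.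
Proof.
  unfold ind. replace (2 * m + (2 * u + 1))%nat with (2 * (m + u) + 1)%nat by lia.
  rewrite s_double1, s_double.
  destruct (Z.eqb_spec (Z.of_nat (S (s (m + u))) - Z.of_nat (s m)) j);
  destruct (Z.eqb_spec (Z.of_nat (s (m + u)) - Z.of_nat (s m)) (j - 1)); auto; lia.
Qed.

Lemma ind_odd_odd j u m : ind j (2 * u + 1) (2 * m + 1) = ind (j + 1) (u + 1) m.
Proof.
  unfold ind. replace (2 * m + 1 + (2 * u + 1))%nat with (2 * (m + (u + 1)))%nat by lia.
  rewrite s_double1, s_double.
  destruct (Z.eqb_spec (Z.of_nat (s (m + (u + 1))) - Z.of_nat (S (s m))) j);
  destruct (Z.eqb_spec (Z.of_nat (s (m + (u + 1))) - Z.of_nat (s m)) (j + 1)); auto; lia.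
Qed.

Lemma cnt_even_aux j u M :
  cnt j (2 * u) (2 * M) = (cnt j u M + cnt j u M)%nat /\
  cnt j (2 * u) (2 * M + 1) = (cnt j u (S M) + cnt j u M)%nat.
Proof.
  induction M as [|M [IH1 IH2]].
  - split; [reflexivity|]. change (2 * 0 + 1)%nat with 1%nat. rewrite !cnt_S.
    rewrite !cnt_0. pose proof (ind_even_even j u 0) as H. simpl in H |- *. rewrite H. lia.
  - split.
    + replace (2 * S M)%nat with (S (2 * M + 1)) by lia.
      rewrite cnt_S, IH2, ind_even_odd, (cnt_S _ _ M). lia.
    + replace (2 * S M + 1)%nat with (S (2 * S M)) by lia.
      rewrite cnt_S. replace (2 * S M)%nat with (S (2 * M + 1)) by lia.
      rewrite cnt_S, IH2, ind_even_odd. replace (S (2 * M + 1)) with (2 * (S M))%nat by lia.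
      rewrite ind_even_even, (cnt_S _ _ (S M)), (cnt_S _ _ M). lia.
Qed.

Lemma cnt_odd_aux j u M :
  cnt j (2 * u + 1) (2 * M) = (cnt (j - 1) u M + cnt (j + 1) (u + 1) M)%nat /\
  cnt j (2 * u + 1) (2 * M + 1) = (cnt (j - 1) u (S M) + cnt (j + 1) (u + 1) M)%nat.
Proof.
  induction M as [|M [IH1 IH2]].
  - split; [reflexivity|]. change (2 * 0 + 1)%nat with 1%nat. rewrite !cnt_S.
    rewrite !cnt_0. pose proof (ind_odd_even j u 0) as H. simpl in H |- *. rewrite H. lia.
  - split.
    + replace (2 * S M)%nat with (S (2 * M + 1)) by lia.
      rewrite cnt_S, IH2, ind_odd_odd, (cnt_S (j + 1) (u + 1) M). lia.
    + replace (2 * S M + 1)%nat with (S (2 * S M)) by lia.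
      rewrite cnt_S. replace (2 * S M)%nat with (S (2 * M + 1)) by lia.
      rewrite cnt_S, IH2, ind_odd_odd. replace (S (2 * M + 1)) with (2 * (S M))%nat by lia.
      rewrite ind_odd_even, (cnt_S _ _ (S M)), (cnt_S (j + 1) _ M). lia.
Qed.

Lemma half_split N : exists M, (N = 2 * M /\ (N + 1) / 2 = M /\ N / 2 = M)%nat \/
                               (N = 2 * M + 1 /\ (N + 1) / 2 = S M /\ N / 2 = M)%nat.
Proof.
  exists (N / 2)%nat. pose proof (Nat.div_mod N 2 ltac:(lia)).
  pose proof (Nat.mod_upper_bound N 2 ltac:(lia)).
  destruct (N mod 2) as [|[|]] eqn:E; [left|right|lia].
  - split; [lia|]. split; [|reflexivity].
    replace (N + 1)%nat with (1 + (N / 2) * 2)%nat by lia. rewrite Nat.div_add by lia. reflexivity.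
  - split; [lia|]. split; [|reflexivity].
    replace (N + 1)%nat with (0 + (S (N / 2)) * 2)%nat by lia. rewrite Nat.div_add by lia. reflexivity.
Qed.

Lemma cnt_even j u N : cnt j (2 * u) N = (cnt j u ((N + 1) / 2) + cnt j u (N / 2))%nat.
Proof.
  destruct (half_split N) as [M [[-> [-> ->]]|[-> [-> ->]]]]; apply (cnt_even_aux j u M).
Qed.

Lemma cnt_odd j u N : cnt j (2 * u + 1) N =
   (cnt (j - 1) u ((N + 1) / 2) + cnt (j + 1) (u + 1) (N / 2))%nat.
Proof.
  destruct (half_split N) as [M [[-> [-> ->]]|[-> [-> ->]]]]; apply (cnt_odd_aux j u M).
Qed.

Lemma cnt_zero j N : cnt j 0 N = if Z.eqb j 0 then N else 0%nat.
Proof.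
  induction N as [|N IH]. destruct (Z.eqb j 0); reflexivity.
  rewrite cnt_S, IH. unfold ind. rewrite Nat.add_0_r, Z.sub_diag.
  destruct (Z.eqb_spec j 0); destruct (Z.eqb_spec 0 j); subst; simpl; try lia.
Qed.

Lemma cnt_le j t N : (cnt j t N <= N)%nat.
Proof. induction N. rewrite cnt_0; lia. rewrite cnt_S. unfold ind. destruct (Z.eqb _ _); lia. Qed.
Lemma inv_n_lim : is_lim_seq (fun n => / INR n) 0.
Proof.
  pose proof (is_lim_seq_inv INR p_infty is_lim_seq_INR ltac:(discriminate)) as H.
  simpl in H. exact H.
Qed.

Lemma ratio_half (c : nat -> nat) :
  (forall N, (N <= 2 * c N + 1 /\ 2 * c N <= N + 1)%nat) ->
  is_lim_seq (fun N => INR (c N) / INR N) (1 / 2).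
Proof.
  intros Hc.
  apply (is_lim_seq_le_le_loc (fun N => 1 / 2 - / INR N / 2) _ (fun N => 1 / 2 + / INR N / 2)).
  - exists 1%nat. intros n Hn. destruct (Hc n) as [H1 H2].
    apply le_INR in H1. apply le_INR in H2. rewrite plus_INR, mult_INR in H1, H2. simpl in H1, H2.
    assert (Hn' : 1 <= INR n) by (apply (le_INR 1); lia).
    assert (Hi : 0 < / INR n) by (apply Rinv_0_lt_compat; lra).
    split.
    + replace (1 / 2 - / INR n / 2) with ((INR n - 1) / 2 * / INR n) by (field; lra).
      unfold Rdiv at 2. apply Rmult_le_compat_r; lra.
    + replace (1 / 2 + / INR n / 2) with ((INR n + 1) / 2 * / INR n) by (field; lra).
      unfold Rdiv at 1. apply Rmult_le_compat_r; lra.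
  - replace (1/2) with (1/2 - 0/2) at 1 by field.
    apply is_lim_seq_minus'. apply is_lim_seq_const.
    apply is_lim_seq_div'. apply inv_n_lim. apply is_lim_seq_const. lra.
  - replace (1/2) with (1/2 + 0/2) at 1 by field.
    apply is_lim_seq_plus'. apply is_lim_seq_const.
    apply is_lim_seq_div'. apply inv_n_lim. apply is_lim_seq_const. lra.
Qed.

Lemma filterlim_half (c : nat -> nat) :
  (forall N, (N <= 2 * c N + 1)%nat) -> filterlim c eventually eventually.
Proof.
  intros Hc P [N0 HP]. exists (2 * N0 + 2)%nat. intros n Hn. apply HP.
  specialize (Hc n). lia.
Qed.

Lemma lim_half (A c : nat -> nat) (a : R) :
  A 0%nat = 0%nat ->
  (forall N, (N <= 2 * c N + 1 /\ 2 * c N <= N + 1)%nat) ->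
  is_lim_seq (fun N => INR (A N) / INR N) a ->
  is_lim_seq (fun N => INR (A (c N)) / INR N) (a / 2).
Proof.
  intros HA Hc Hl.
  apply (is_lim_seq_ext (fun N => INR (A (c N)) / INR (c N) * (INR (c N) / INR N))).
  - intros N. destruct (Nat.eq_dec (c N) 0) as [E|E].
    + rewrite E, HA. simpl. unfold Rdiv. rewrite !Rmult_0_l. reflexivity.
    + field. split. apply not_0_INR. intros ->. specialize (Hc 0%nat). lia.
      apply not_0_INR. auto.
  - replace (a / 2) with (a * (1 / 2)) by field.
    apply is_lim_seq_mult'.
    + apply (is_lim_seq_subseq (fun N => INR (A N) / INR N)).
      apply filterlim_half. intros N; apply Hc. exact Hl.
    + apply ratio_half. exact Hc.
Qed.

Lemma ceil_half N : (N <= 2 * ((N + 1) / 2) + 1 /\ 2 * ((N + 1) / 2) <= N + 1)%nat.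
Proof.
  pose proof (Nat.div_mod (N + 1) 2 ltac:(lia)). pose proof (Nat.mod_upper_bound (N + 1) 2 ltac:(lia)). lia.
Qed.

Lemma floor_half N : (N <= 2 * (N / 2) + 1 /\ 2 * (N / 2) <= N + 1)%nat.
Proof.
  pose proof (Nat.div_mod N 2 ltac:(lia)). pose proof (Nat.mod_upper_bound N 2 ltac:(lia)). lia.
Qed.

Lemma lim_comb (A B : nat -> nat) (a b : R) :
  A 0%nat = 0%nat -> B 0%nat = 0%nat ->
  is_lim_seq (fun N => INR (A N) / INR N) a ->
  is_lim_seq (fun N => INR (B N) / INR N) b ->
  is_lim_seq (fun N => INR (A ((N + 1) / 2) + B (N / 2))%nat / INR N) ((a + b) / 2).
Proof.
  intros HA HB Ha Hb.
  apply (is_lim_seq_ext (fun N => INR (A ((N + 1) / 2)%nat) / INR N + INR (B (N / 2))%nat / INR N)).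
  - intros N. rewrite plus_INR. unfold Rdiv. ring.
  - replace ((a + b) / 2) with (a / 2 + b / 2) by field.
    apply is_lim_seq_plus'.
    + apply (lim_half A (fun N => (N + 1) / 2)%nat); auto. apply ceil_half.
    + apply (lim_half B (fun N => N / 2)%nat); auto. apply floor_half.
Qed.

Definition freq j t := fun N => INR (cnt j t N) / INR N.

Definition pm (j : Z) : R := if Z.eqb j 0 then 1 else 0.

Lemma lim_zero j : is_lim_seq (freq j 0) (pm j).
Proof.
  unfold freq. apply (is_lim_seq_ext_loc (fun _ => pm j)). unfold pm.
  - exists 1%nat. intros n Hn. rewrite cnt_zero. destruct (Z.eqb j 0).
    + field. apply not_0_INR. lia.
    + simpl. unfold Rdiv. ring.
  - apply is_lim_seq_const.
Qed.

Lemma cnt1_big j N : (2 <= j)%Z -> cnt j 1 N = 0%nat.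
Proof.
  revert j. induction N as [N IH] using lt_wf_ind. intros j Hj.
  pose proof (cnt_odd j 0 N) as H. rewrite Nat.mul_0_r, Nat.add_0_l in H. rewrite H.
  rewrite cnt_zero. destruct (Z.eqb_spec (j - 1) 0); [lia|].
  destruct N. reflexivity.
  rewrite IH; [reflexivity| |lia]. apply Nat.div_lt; lia.
Qed.

Lemma lim_one_big j : (2 <= j)%Z -> is_lim_seq (freq j 1) 0.
Proof.
  intros Hj. unfold freq. apply (is_lim_seq_ext (fun _ => 0)).
  intros n. rewrite cnt1_big by auto. simpl. unfold Rdiv. ring.
  apply is_lim_seq_const.
Qed.

Lemma lim_one_le i : exists l : R, is_lim_seq (freq (1 - Z.of_nat i) 1) l.
Proof.
  induction i as [|i [l IH]].
  - exists ((1 + 0) / 2). unfold freq.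
    apply (is_lim_seq_ext (fun N => INR (cnt 0 0 ((N + 1) / 2) + cnt 2 1 (N / 2))%nat / INR N)).
    { intros N. pose proof (cnt_odd 1 0 N) as H. rewrite Nat.mul_0_r, Nat.add_0_l in H. change (1 - Z.of_nat 0)%Z with 1%Z. rewrite H. reflexivity. }
    apply lim_comb; try reflexivity.
    + apply (lim_zero 0).
    + apply lim_one_big. lia.
  - exists ((0 + l) / 2). unfold freq.
    apply (is_lim_seq_ext (fun N => INR (cnt (- Z.of_nat i - 1) 0 ((N + 1) / 2)
                                          + cnt (1 - Z.of_nat i) 1 (N / 2))%nat / INR N)).
    { intros N. pose proof (cnt_odd (1 - Z.of_nat (S i)) 0 N) as H. rewrite Nat.mul_0_r, Nat.add_0_l in H. rewrite H.
      replace (1 - Z.of_nat (S i) - 1)%Z with (- Z.of_nat i - 1)%Z by lia.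
      replace (1 - Z.of_nat (S i) + 1)%Z with (1 - Z.of_nat i)%Z by lia. reflexivity. }
    apply lim_comb; try reflexivity.
    + pose proof (lim_zero (- Z.of_nat i - 1)) as H.
      unfold pm in H. destruct (Z.eqb_spec (- Z.of_nat i - 1) 0); [lia|]. exact H.
    + exact IH.
Qed.

Lemma lim_exists t j : exists l : R, is_lim_seq (freq j t) l.
Proof.
  revert j. induction t as [t IH] using lt_wf_ind. intros j.
  destruct (Nat.Even_or_Odd t) as [[u Hu]|[u Hu]].
  - destruct u as [|u].
    + subst. eexists. apply lim_zero.
    + destruct (IH (S u) ltac:(lia) j) as [l Hl].
      exists ((l + l) / 2). unfold freq. rewrite Hu.
      apply (is_lim_seq_ext (fun N => INR (cnt j (S u) ((N + 1) / 2) + cnt j (S u) (N / 2))%nat / INR N)).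
      { intros N. rewrite cnt_even. reflexivity. }
      apply lim_comb; auto.
  - destruct u as [|u].
    + subst. simpl. destruct (Z_le_gt_dec 2 j) as [Hj|Hj].
      * eexists. apply lim_one_big; auto.
      * destruct (lim_one_le (Z.to_nat (1 - j))) as [l Hl].
        replace (1 - Z.of_nat (Z.to_nat (1 - j)))%Z with j in Hl by lia. eauto.
    + destruct (IH (S u) ltac:(lia) (j - 1)%Z) as [l1 H1].
      destruct (IH (S u + 1)%nat ltac:(lia) (j + 1)%Z) as [l2 H2].
      exists ((l1 + l2) / 2). unfold freq. rewrite Hu.
      apply (is_lim_seq_ext (fun N => INR (cnt (j - 1) (S u) ((N + 1) / 2) + cnt (j + 1) (S u + 1) (N / 2))%nat / INR N)).
      { intros N. rewrite cnt_odd. reflexivity. }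
      apply lim_comb; auto.
Qed.

Lemma delta_lim t j : is_lim_seq (freq j t) (delta j t).
Proof.
  destruct (lim_exists t j) as [l Hl]. unfold delta.
  change (Lim_seq (fun N => INR (cnt j t N) / INR N)) with (Lim_seq (freq j t)).
  rewrite (is_lim_seq_unique _ _ Hl). exact Hl.
Qed.

Lemma delta_zero j : delta j 0 = pm j.
Proof.
  pose proof (is_lim_seq_unique _ _ (lim_zero j)). unfold delta.
  change (Lim_seq (fun N => INR (cnt j 0 N) / INR N)) with (Lim_seq (freq j 0)). rewrite H. reflexivity.
Qed.

Lemma delta_even j u : delta j (2 * u)%nat = delta j u.
Proof.
  assert (H : is_lim_seq (freq j (2 * u)%nat) ((delta j u + delta j u) / 2)).
  { unfold freq.
    apply (is_lim_seq_ext (fun N => INR (cnt j u ((N + 1) / 2) + cnt j u (N / 2))%nat / INR N)).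
    { intros N. rewrite cnt_even. reflexivity. }
    apply lim_comb; auto; apply delta_lim. }
  unfold delta at 1.
  change (Lim_seq (fun N => INR (cnt j (2 * u) N) / INR N)) with (Lim_seq (freq j (2 * u))).
  rewrite (is_lim_seq_unique _ _ H). simpl. field.
Qed.

Lemma delta_odd j u : delta j (2 * u + 1)%nat = (delta (j - 1) u + delta (j + 1) (u + 1)%nat) / 2.
Proof.
  assert (H : is_lim_seq (freq j (2 * u + 1)%nat) ((delta (j - 1) u + delta (j + 1) (u + 1)%nat) / 2)).
  { unfold freq.
    apply (is_lim_seq_ext (fun N => INR (cnt (j - 1) u ((N + 1) / 2) + cnt (j + 1) (u + 1) (N / 2))%nat / INR N)).
    { intros N. rewrite cnt_odd. reflexivity. }
    apply lim_comb; auto; apply delta_lim. }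
  unfold delta at 1.
  change (Lim_seq (fun N => INR (cnt j (2 * u + 1) N) / INR N)) with (Lim_seq (freq j (2 * u + 1))).
  rewrite (is_lim_seq_unique _ _ H). reflexivity.
Qed.

Lemma delta_bounds j t : 0 <= delta j t <= 1.
Proof.
  pose proof (delta_lim t j) as H. split.
  - apply (is_lim_seq_le (fun _ => 0) (freq j t) 0 (delta j t)); auto.
    + intros N. unfold freq. destruct N. simpl. unfold Rdiv; rewrite Rinv_0; lra.
      apply Rdiv_le_0_compat; [apply pos_INR|apply lt_0_INR; lia].
    + apply is_lim_seq_const.
  - apply (is_lim_seq_le (freq j t) (fun _ => 1) (delta j t) 1); auto.
    + intros N. unfold freq. destruct N. rewrite cnt_0. simpl. unfold Rdiv; rewrite Rinv_0; lra.
      apply Rmult_le_reg_r with (INR (S N)). apply lt_0_INR; lia.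
      unfold Rdiv. rewrite Rmult_assoc, Rinv_l, Rmult_1_r, Rmult_1_l. apply le_INR, cnt_le.
      apply not_0_INR; lia.
    + apply is_lim_seq_const.
Qed.

Lemma delta_one_big j : (2 <= j)%Z -> delta j 1 = 0.
Proof. intros Hj. unfold delta.
  change (Lim_seq (fun N => INR (cnt j 1 N) / INR N)) with (Lim_seq (freq j 1)).
  rewrite (is_lim_seq_unique _ _ (lim_one_big j Hj)). reflexivity. Qed.
Lemma delta_top t j : (Z.of_nat t < j)%Z -> delta j t = 0.
Proof.
  revert j. induction t as [t IH] using lt_wf_ind. intros j Hj.
  destruct (Nat.Even_or_Odd t) as [[u Hu]|[u Hu]]; subst t.
  - destruct u as [|u].
    + rewrite Nat.mul_0_r, delta_zero. unfold pm. destruct (Z.eqb_spec j 0); [lia|reflexivity].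
    + rewrite delta_even. apply IH; lia.
  - destruct u as [|u].
    + rewrite Nat.mul_0_r, Nat.add_0_l. apply delta_one_big. lia.
    + rewrite delta_odd. rewrite (IH (S u)), (IH (S u + 1)%nat); try lia. field.
Qed.

Lemma delta_one_tail i : delta (1 - Z.of_nat i) 1 <= 1 / 2 ^ i.
Proof.
  induction i as [|i IH].
  - change (1 - Z.of_nat 0)%Z with 1%Z. simpl pow. pose proof (delta_bounds 1 1). lra.
  - pose proof (delta_odd (1 - Z.of_nat (S i)) 0) as H.
    rewrite Nat.mul_0_r, Nat.add_0_l in H. rewrite H, delta_zero. unfold pm.
    destruct (Z.eqb_spec (1 - Z.of_nat (S i) - 1) 0); [lia|].
    replace (1 - Z.of_nat (S i) + 1)%Z with (1 - Z.of_nat i)%Z by lia.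
    simpl (0 + 1)%nat. simpl pow.
    replace (1 / (2 * 2 ^ i)) with ((1 / 2 ^ i) / 2) by (field; apply pow_nonzero; lra). lra.
Qed.

Lemma pow2_pos k : 0 < 2 ^ k.
Proof. apply pow_lt. lra. Qed.

Lemma delta_tail t : exists C, 0 <= C /\ forall k : nat, delta (- Z.of_nat k) t <= C / 2 ^ k.
Proof.
  induction t as [t IH] using lt_wf_ind.
  destruct (Nat.Even_or_Odd t) as [[u Hu]|[u Hu]]; subst t.
  - destruct u as [|u].
    + exists 1. split; [lra|]. intros k. rewrite Nat.mul_0_r, delta_zero. unfold pm.
      destruct (Z.eqb_spec (- Z.of_nat k) 0).
      * assert (k = 0%nat) by lia. subst. simpl. lra.
      * pose proof (pow2_pos k). apply Rlt_le, Rdiv_lt_0_compat; lra.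
    + destruct (IH (S u) ltac:(lia)) as [C [HC H]]. exists C. split; auto.
      intros k. rewrite delta_even. apply H.
  - destruct u as [|u].
    + exists 1. split; [lra|]. intros k. rewrite Nat.mul_0_r, Nat.add_0_l.
      pose proof (delta_one_tail (S k)) as H.
      replace (1 - Z.of_nat (S k))%Z with (- Z.of_nat k)%Z in H by lia.
      simpl pow in H. pose proof (pow2_pos k).
      eapply Rle_trans; [exact H|]. apply Rmult_le_compat_l; [lra|].
      apply Rinv_le_contravar; lra.
    + destruct (IH (S u) ltac:(lia)) as [C1 [HC1 H1]].
      destruct (IH (S u + 1)%nat ltac:(lia)) as [C2 [HC2 H2]].
      exists (C1 + 2 * C2 + 1). split; [lra|]. intros k. rewrite delta_odd.
      pose proof (H1 (S k)) as H1'. replace (- Z.of_nat (S k))%Z with (- Z.of_nat k - 1)%Z in H1' by lia.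
      simpl pow in H1'. pose proof (pow2_pos k) as Hp.
      assert (H3 : delta (- Z.of_nat k + 1) (S u + 1) <= (2 * C2 + 1) / 2 ^ k).
      { destruct k as [|k].
        - pose proof (delta_bounds (- Z.of_nat 0 + 1) (S u + 1)). simpl pow. lra.
        - pose proof (H2 k) as H2'. replace (- Z.of_nat k)%Z with (- Z.of_nat (S k) + 1)%Z in H2' by lia.
          simpl pow. pose proof (pow2_pos k).
          eapply Rle_trans; [exact H2'|].
          replace ((2 * C2 + 1) / (2 * 2 ^ k)) with ((C2 + 1/2) / 2 ^ k) by (field; lra).
          unfold Rdiv. apply Rmult_le_compat_r. left; apply Rinv_0_lt_compat; lra. lra. }
      replace (C1 / (2 * 2 ^ k)) with (C1 / 2 ^ k / 2) in H1' by (field; lra).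
      assert (C1 / 2 ^ k >= 0) by (apply Rle_ge, Rdiv_le_0_compat; lra).
      assert ((2 * C2 + 1) / 2 ^ k >= 0) by (apply Rle_ge, Rdiv_le_0_compat; lra).
      replace ((C1 + 2 * C2 + 1) / 2 ^ k) with (C1 / 2 ^ k + (2 * C2 + 1) / 2 ^ k) by (field; lra).
      lra.
Qed.

Definition Pos (f : Z -> R) : nat -> R := fun k => f (Z.of_nat k).
Definition Neg (f : Z -> R) : nat -> R := fun k => f (- Z.of_nat (S k))%Z.
Definition summ (f : Z -> R) : Prop := ex_series (Pos f) /\ ex_series (Neg f).
Definition TS (f : Z -> R) : R := Series (Pos f) + Series (Neg f).

Lemma ex_series_zero : ex_series (fun _ : nat => 0).
Proof.
  apply (ex_series_ext (fun n => scal 0 ((1/2) ^ n))).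
  - intros n. unfold scal; simpl. unfold mult; simpl. ring.
  - apply (@ex_series_scal_l R_AbsRing R_NormedModule 0 (fun n => (1/2) ^ n)).
    apply ex_series_geom. rewrite Rabs_pos_eq; lra.
Qed.

Lemma Series_zero : Series (fun _ : nat => 0) = 0.
Proof.
  rewrite (Series_ext _ (fun n => 0 * (1/2) ^ n)). rewrite Series_scal_l. ring.
  intros; ring.
Qed.

Lemma pow_bound_nat k : (2 ^ k * (k + 2) ^ 3 <= 512 * 3 ^ k)%nat.
Proof.
  assert (Hs : forall k, (2 ^ (k + 7) * (k + 9) ^ 3 <= 512 * 3 ^ (k + 7))%nat).
  { induction k0 as [|k0 IH]. apply Nat.leb_le. reflexivity.
    replace (S k0 + 7)%nat with (S (k0 + 7)) by lia. rewrite (Nat.pow_succ_r' 2 (k0 + 7)), (Nat.pow_succ_r' 3 (k0 + 7)).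
    assert (H1 : (2 * (S k0 + 9) ^ 3 <= 3 * (k0 + 9) ^ 3)%nat).
    { assert (E : forall x, (x ^ 3 = x * x * x)%nat) by (intros; simpl; lia).
      rewrite !E. nia. }
    set (X := (2 ^ (k0 + 7))%nat) in *. set (Y := (3 ^ (k0 + 7))%nat) in *.
    set (a := ((S k0 + 9) ^ 3)%nat) in *. set (b := ((k0 + 9) ^ 3)%nat) in *.
    nia. }
  destruct (le_lt_dec 7 k) as [Hk|Hk].
  - specialize (Hs (k - 7)%nat). replace (k - 7 + 7)%nat with k in Hs by lia.
    replace (k - 7 + 9)%nat with (k + 2)%nat in Hs by lia. exact Hs.
  - do 7 (destruct k as [|k]; [apply Nat.leb_le; reflexivity|]). lia.
Qed.

Lemma pow_bound_R k : (INR k + 2) ^ 3 / 2 ^ k <= 512 * (3 / 4) ^ k.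
Proof.
  pose proof (pow_bound_nat k) as H. apply le_INR in H.
  rewrite !mult_INR, !pow_INR in H. rewrite plus_INR in H.
  assert (E1 : INR 512 = 512) by (rewrite INR_IZR_INZ; reflexivity).
  assert (E2 : INR 3 = 3) by (rewrite INR_IZR_INZ; reflexivity).
  assert (E3 : INR 2 = 2) by (rewrite INR_IZR_INZ; reflexivity).
  rewrite E1, E2, E3 in H.
  pose proof (pow2_pos k).
  replace ((3 / 4) ^ k) with (3 ^ k / 2 ^ k / 2 ^ k).
  2:{ unfold Rdiv. rewrite !Rpow_mult_distr, pow_inv. replace 4 with (2 * 2) by ring.
      rewrite Rpow_mult_distr, Rinv_mult. ring. }
  apply Rmult_le_reg_r with (2 ^ k * 2 ^ k). nra.
  replace ((INR k + 2) ^ 3 / 2 ^ k * (2 ^ k * 2 ^ k)) with (2 ^ k * (INR k + 2) ^ 3) by (field; lra).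
  replace (512 * (3 ^ k / 2 ^ k / 2 ^ k) * (2 ^ k * 2 ^ k)) with (512 * 3 ^ k) by (field; lra).
  lra.
Qed.

Lemma IZR_abs_neg k : IZR (Z.abs (- Z.of_nat (S k))) = INR k + 1.
Proof.
  rewrite Z.abs_opp, Z.abs_eq by lia. rewrite <- INR_IZR_INZ, S_INR. reflexivity.
Qed.

Lemma summ_delta t (w : Z -> R) (A : R) :
  (forall i, Rabs (w i) <= A * (IZR (Z.abs i) + 1) ^ 3) ->
  summ (fun i => delta i t * w i).
Proof.
  intros Hw. assert (HA : 0 <= A).
  { specialize (Hw 0%Z). simpl in Hw. pose proof (Rabs_pos (w 0%Z)). lra. }
  split.
  - unfold Pos. apply (ex_series_incr_n _ (S t)).
    apply (ex_series_ext (fun _ => 0)); [|apply ex_series_zero].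
    intros n. simpl. rewrite delta_top by lia. rewrite Rmult_0_l. reflexivity.
  - unfold Neg. destruct (delta_tail t) as [C [HC Ht]].
    apply (@ex_series_le R_AbsRing R_CompleteNormedModule _ (fun k => scal (C * A * 512) ((3/4) ^ k))).
    + intros k. pose proof (Ht (S k)) as H1. pose proof (delta_bounds (- Z.of_nat (S k)) t).
      pose proof (Hw (- Z.of_nat (S k))%Z) as H2. rewrite IZR_abs_neg in H2.
      set (i := (- Z.of_nat (S k))%Z) in *.
      unfold norm; simpl. unfold abs; simpl. unfold scal; simpl. unfold mult; simpl.
      rewrite Rabs_mult. rewrite (Rabs_pos_eq (delta _ t)) by lra.
      pose proof (pow_bound_R k) as H3.
      pose proof (pow2_pos k) as Hp. simpl pow in H1.
      replace (INR k + 1 + 1) with (INR k + 2) in H2 by ring.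
      apply Rle_trans with ((C / (2 * 2 ^ k)) * (A * (INR k + 2) ^ 3)).
      * apply Rmult_le_compat; [lra | apply Rabs_pos | lra | exact H2].
      * replace (C / (2 * 2 ^ k) * (A * (INR k + 2) ^ 3)) with ((C * A / 2) * ((INR k + 2) ^ 3 / 2 ^ k)) by (field; lra).
        apply Rle_trans with ((C * A / 2) * (512 * (3 / 4) ^ k)).
        apply Rmult_le_compat_l; [|exact H3]. apply Rmult_le_pos; [|lra]. apply Rmult_le_pos; lra.
        assert (0 <= (3/4) ^ k) by (apply pow_le; lra).
        assert (0 <= C * A) by (apply Rmult_le_pos; lra). nra.
    + apply (@ex_series_scal_l R_AbsRing R_NormedModule (C * A * 512) (fun n => (3/4) ^ n)).
      apply ex_series_geom. rewrite Rabs_pos_eq; lra.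
Qed.
Lemma summ_plus f g : summ f -> summ g ->
  summ (fun i => f i + g i) /\ TS (fun i => f i + g i) = TS f + TS g.
Proof.
  intros [Hf1 Hf2] [Hg1 Hg2]. unfold summ, TS, Pos, Neg in *. split; [split|].
  - apply (ex_series_ext (fun n => plus (f (Z.of_nat n)) (g (Z.of_nat n)))). reflexivity.
    apply (@ex_series_plus R_AbsRing R_NormedModule); auto.
  - apply (ex_series_ext (fun n => plus (f (- Z.of_nat (S n))%Z) (g (- Z.of_nat (S n))%Z))). reflexivity.
    apply (@ex_series_plus R_AbsRing R_NormedModule); auto.
  - rewrite (Series_plus (fun k => f (Z.of_nat k)) (fun k => g (Z.of_nat k))) by auto.
    rewrite (Series_plus (fun k => f (- Z.of_nat (S k))%Z) (fun k => g (- Z.of_nat (S k))%Z)) by auto. ring.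
Qed.

Lemma summ_scal c f : summ f ->
  summ (fun i => c * f i) /\ TS (fun i => c * f i) = c * TS f.
Proof.
  intros [Hf1 Hf2]. unfold summ, TS, Pos, Neg in *. split; [split|].
  - apply (ex_series_ext (fun n => scal c (f (Z.of_nat n)))). reflexivity.
    apply (@ex_series_scal_l R_AbsRing R_NormedModule); auto.
  - apply (ex_series_ext (fun n => scal c (f (- Z.of_nat (S n))%Z))). reflexivity.
    apply (@ex_series_scal_l R_AbsRing R_NormedModule); auto.
  - rewrite (Series_scal_l c (fun k => f (Z.of_nat k))).
    rewrite (Series_scal_l c (fun k => f (- Z.of_nat (S k))%Z)). ring.
Qed.

Lemma summ_ext f g : (forall i, f i = g i) -> summ f -> summ g /\ TS g = TS f.
Proof.
  intros E [H1 H2]. unfold summ, TS, Pos, Neg in *. split; [split|].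
  - apply (ex_series_ext (fun n => f (Z.of_nat n))); auto.
  - apply (ex_series_ext (fun n => f (- Z.of_nat (S n))%Z)); auto.
  - rewrite (Series_ext (fun k => g (Z.of_nat k)) (fun k => f (Z.of_nat k))) by auto.
    rewrite (Series_ext (fun k => g (- Z.of_nat (S k))%Z) (fun k => f (- Z.of_nat (S k))%Z)) by auto.
    reflexivity.
Qed.

Lemma summ_shiftp f : summ f -> summ (fun i => f (i + 1)%Z) /\ TS (fun i => f (i + 1)%Z) = TS f.
Proof.
  intros [H1 H2]. unfold summ, TS, Pos, Neg in *.
  assert (E1 : forall k, f (Z.of_nat k + 1)%Z = f (Z.of_nat (S k))).
  { intros k. f_equal. lia. }
  assert (E2 : forall k, f (- Z.of_nat (S (S k)) + 1)%Z = f (- Z.of_nat (S k))%Z).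
  { intros k. f_equal. lia. }
  assert (A1 : ex_series (fun k => f (Z.of_nat k + 1)%Z)).
  { apply (ex_series_ext (fun k => f (Z.of_nat (S k)))). intros; symmetry; auto.
    apply (ex_series_incr_1 (fun k => f (Z.of_nat k))). auto. }
  assert (A2 : ex_series (fun k => f (- Z.of_nat (S k) + 1)%Z)).
  { apply ex_series_incr_1.
    apply (ex_series_ext (fun k => f (- Z.of_nat (S k))%Z)). intros; symmetry; auto. auto. }
  split; [split; auto|].
  rewrite (Series_incr_1 (fun k => f (- Z.of_nat (S k) + 1)%Z)) by auto.
  rewrite (Series_incr_1 (fun k => f (Z.of_nat k))) by auto.
  rewrite (Series_ext (fun k => f (Z.of_nat k + 1)%Z) (fun k => f (Z.of_nat (S k)))) by auto.
  rewrite (Series_ext (fun k => f (- Z.of_nat (S (S k)) + 1)%Z) (fun k => f (- Z.of_nat (S k))%Z)) by auto.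
  replace (- Z.of_nat 1 + 1)%Z with (Z.of_nat 0) by reflexivity. ring.
Qed.

Lemma summ_shiftm f : summ f -> summ (fun i => f (i - 1)%Z) /\ TS (fun i => f (i - 1)%Z) = TS f.
Proof.
  intros [H1 H2]. unfold summ, TS, Pos, Neg in *.
  assert (E1 : forall k, f (Z.of_nat (S k) - 1)%Z = f (Z.of_nat k)).
  { intros k. f_equal. lia. }
  assert (E2 : forall k, f (- Z.of_nat (S k) - 1)%Z = f (- Z.of_nat (S (S k)))%Z).
  { intros k. f_equal. lia. }
  assert (A1 : ex_series (fun k => f (Z.of_nat k - 1)%Z)).
  { apply ex_series_incr_1.
    apply (ex_series_ext (fun k => f (Z.of_nat k))). intros; symmetry; auto. auto. }
  assert (A2 : ex_series (fun k => f (- Z.of_nat (S k) - 1)%Z)).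
  { apply (ex_series_ext (fun k => f (- Z.of_nat (S (S k)))%Z)). intros; symmetry; auto.
    apply (ex_series_incr_1 (fun k => f (- Z.of_nat (S k))%Z)). auto. }
  split; [split; auto|].
  rewrite (Series_incr_1 (fun k => f (Z.of_nat k - 1)%Z)) by auto.
  rewrite (Series_incr_1 (fun k => f (- Z.of_nat (S k))%Z)) by auto.
  rewrite (Series_ext (fun k => f (Z.of_nat (S k) - 1)%Z) (fun k => f (Z.of_nat k))) by auto.
  rewrite (Series_ext (fun k => f (- Z.of_nat (S k) - 1)%Z) (fun k => f (- Z.of_nat (S (S k)))%Z)) by auto.
  replace (Z.of_nat 0 - 1)%Z with (- Z.of_nat 1)%Z by reflexivity. ring.
Qed.

Lemma TS_pm (w : Z -> R) : TS (fun i => pm i * w i) = w 0%Z.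
Proof.
  unfold TS, Pos, Neg.
  assert (E1 : ex_series (fun k => pm (Z.of_nat k) * w (Z.of_nat k))).
  { apply ex_series_incr_1. apply (ex_series_ext (fun _ => 0)); [|apply ex_series_zero].
    intros n. unfold pm. replace (Z.of_nat (S n) =? 0)%Z with false by (symmetry; apply Z.eqb_neq; lia). symmetry; apply Rmult_0_l. }
  rewrite Series_incr_1 by auto.
  rewrite (Series_ext (fun k => pm (Z.of_nat (S k)) * w (Z.of_nat (S k))) (fun _ => 0)).
  rewrite (Series_ext (fun k => pm (- Z.of_nat (S k)) * w (- Z.of_nat (S k))%Z) (fun _ => 0)).
  rewrite Series_zero. unfold pm. simpl. ring.
  - intros n. unfold pm. replace (- Z.of_nat (S n) =? 0)%Z with false by (symmetry; apply Z.eqb_neq; lia). ring.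
  - intros n. unfold pm. replace (Z.of_nat (S n) =? 0)%Z with false by (symmetry; apply Z.eqb_neq; lia). ring.
Qed.

Definition Mo (m t : nat) : R := TS (fun i => delta i t * IZR i ^ m).

Lemma moment_eq m t : moment m t = Mo m t.
Proof.
  unfold moment, Mo, TS, Pos, Neg. f_equal.
  - apply Series_ext. intros n. rewrite <- INR_IZR_INZ. reflexivity.
  - apply Series_ext. intros n. rewrite opp_IZR, <- INR_IZR_INZ. reflexivity.
Qed.

Lemma pow_abs_bound (x y : R) (m : nat) : (m <= 3)%nat -> Rabs x <= y -> 1 <= y -> Rabs (x ^ m) <= y ^ 3.
Proof.
  intros Hm Hx Hy. rewrite <- RPow_abs. apply Rle_trans with (y ^ m).
  - apply pow_incr. split; [apply Rabs_pos|auto].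
  - apply Rle_pow; auto.
Qed.

Lemma abs_IZR_le i : Rabs (IZR i) <= IZR (Z.abs i) + 1.
Proof. rewrite <- abs_IZR. lra. Qed.

Lemma abs_IZR_p1 i : Rabs (IZR i + 1) <= IZR (Z.abs i) + 1.
Proof. eapply Rle_trans; [apply Rabs_triang|]. rewrite <- abs_IZR, Rabs_R1. lra. Qed.

Lemma abs_IZR_m1 i : Rabs (IZR i - 1) <= IZR (Z.abs i) + 1.
Proof. eapply Rle_trans; [apply Rabs_triang|]. rewrite <- abs_IZR, Rabs_Ropp, Rabs_R1. lra. Qed.

Lemma one_le_abs i : 1 <= IZR (Z.abs i) + 1.
Proof. pose proof (IZR_le 0 (Z.abs i) (Z.abs_nonneg i)). lra. Qed.

Lemma summ_mom t m : (m <= 3)%nat -> summ (fun i => delta i t * IZR i ^ m).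
Proof.
  intros Hm. apply (summ_delta t _ 1). intros i. rewrite Rmult_1_l.
  apply pow_abs_bound; auto. apply abs_IZR_le. apply one_le_abs.
Qed.

Lemma summ_p1 t m : (m <= 3)%nat -> summ (fun i => delta i t * (IZR i + 1) ^ m).
Proof.
  intros Hm. apply (summ_delta t _ 1). intros i. rewrite Rmult_1_l.
  apply pow_abs_bound; auto. apply abs_IZR_p1. apply one_le_abs.
Qed.

Lemma summ_m1 t m : (m <= 3)%nat -> summ (fun i => delta i t * (IZR i - 1) ^ m).
Proof.
  intros Hm. apply (summ_delta t _ 1). intros i. rewrite Rmult_1_l.
  apply pow_abs_bound; auto. apply abs_IZR_m1. apply one_le_abs.
Qed.

Lemma Mo_even m u : Mo m (2 * u)%nat = Mo m u.
Proof.
  unfold Mo, TS, Pos, Neg. f_equal; apply Series_ext; intros n; rewrite delta_even; reflexivity.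
Qed.

Lemma Mo_zero m : Mo m 0 = 0 ^ m.
Proof.
  unfold Mo. replace (TS (fun i => delta i 0 * IZR i ^ m)) with (TS (fun i => pm i * IZR i ^ m)).
  - rewrite TS_pm. reflexivity.
  - unfold TS, Pos, Neg. f_equal; apply Series_ext; intros n; rewrite delta_zero; reflexivity.
Qed.

Lemma Mo_odd m u : (m <= 3)%nat ->
  Mo m (2 * u + 1)%nat = (TS (fun i => delta i u * (IZR i + 1) ^ m)
                         + TS (fun i => delta i (u + 1)%nat * (IZR i - 1) ^ m)) / 2.
Proof.
  intros Hm.
  set (F := fun i => delta i u * (IZR i + 1) ^ m).
  set (G := fun i => delta i (u + 1)%nat * (IZR i - 1) ^ m).
  destruct (summ_shiftm F (summ_p1 u m Hm)) as [SF EF].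
  destruct (summ_shiftp G (summ_m1 (u + 1) m Hm)) as [SG EG].
  destruct (summ_scal (1/2) _ SF) as [SF2 EF2].
  destruct (summ_scal (1/2) _ SG) as [SG2 EG2].
  destruct (summ_plus _ _ SF2 SG2) as [S3 E3].
  assert (Hx : forall i, (fun i => 1 / 2 * F (i - 1)%Z + 1 / 2 * G (i + 1)%Z) i =
                         (fun i => delta i (2 * u + 1)%nat * IZR i ^ m) i).
  { intros i. cbv beta. rewrite delta_odd. unfold F, G.
    replace (IZR (i - 1) + 1) with (IZR i) by (rewrite minus_IZR; ring).
    replace (IZR (i + 1) - 1) with (IZR i) by (rewrite plus_IZR; ring). field. }
  destruct (summ_ext _ _ Hx S3) as [_ E4].
  unfold Mo. rewrite E4, E3, EF2, EG2, EF, EG. fold F G. lra.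
Qed.

Lemma TS_cubic t a0 a1 a2 a3 :
  TS (fun i => delta i t * (a3 * IZR i ^ 3 + a2 * IZR i ^ 2 + a1 * IZR i ^ 1 + a0 * IZR i ^ 0))
  = a3 * Mo 3 t + a2 * Mo 2 t + a1 * Mo 1 t + a0 * Mo 0 t.
Proof.
  destruct (summ_scal a3 _ (summ_mom t 3 ltac:(lia))) as [S3 E3].
  destruct (summ_scal a2 _ (summ_mom t 2 ltac:(lia))) as [S2 E2].
  destruct (summ_scal a1 _ (summ_mom t 1 ltac:(lia))) as [S1 E1].
  destruct (summ_scal a0 _ (summ_mom t 0 ltac:(lia))) as [S0 E0].
  destruct (summ_plus _ _ S3 S2) as [S32 E32].
  destruct (summ_plus _ _ S32 S1) as [S321 E321].
  destruct (summ_plus _ _ S321 S0) as [S3210 E3210].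
  unshelve epose proof (summ_ext _ (fun i => delta i t * (a3 * IZR i ^ 3 + a2 * IZR i ^ 2 + a1 * IZR i ^ 1 + a0 * IZR i ^ 0)) _ S3210) as [_ E].
  { intros i. cbv beta. ring. }
  rewrite E, E3210, E321, E32, E3, E2, E1, E0. unfold Mo. ring.
Qed.

Ltac tcub t a0 a1 a2 a3 :=
  transitivity (TS (fun i => delta i t * (a3 * IZR i ^ 3 + a2 * IZR i ^ 2 + a1 * IZR i ^ 1 + a0 * IZR i ^ 0)));
  [unfold TS, Pos, Neg; f_equal; apply Series_ext; intros; ring | rewrite TS_cubic; ring].

Lemma TS_p1 t m : (m <= 3)%nat -> TS (fun i => delta i t * (IZR i + 1) ^ m) =
  match m with
  | 0 => Mo 0 t
  | 1 => Mo 1 t + Mo 0 t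
  | 2 => Mo 2 t + 2 * Mo 1 t + Mo 0 t
  | _ => Mo 3 t + 3 * Mo 2 t + 3 * Mo 1 t + Mo 0 t
  end.
Proof.
  intros Hm.
  destruct m as [|[|[|[|m]]]]; try lia.
  - tcub t 1 0 0 0.
  - tcub t 1 1 0 0.
  - tcub t 1 2 1 0.
  - tcub t 1 3 3 1.
Qed.

Lemma TS_m1 t m : (m <= 3)%nat -> TS (fun i => delta i t * (IZR i - 1) ^ m) =
  match m with
  | 0 => Mo 0 t
  | 1 => Mo 1 t - Mo 0 t
  | 2 => Mo 2 t - 2 * Mo 1 t + Mo 0 t
  | _ => Mo 3 t - 3 * Mo 2 t + 3 * Mo 1 t - Mo 0 t
  end.
Proof.
  intros Hm.
  destruct m as [|[|[|[|m]]]]; try lia.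
  - tcub t 1 0 0 0.
  - tcub t (-1) 1 0 0.
  - tcub t 1 (-2) 1 0.
  - tcub t (-1) 3 (-3) 1.
Qed.

Lemma strong_ind_t (P : nat -> Prop) :
  P 0%nat -> P 1%nat ->
  (forall u, (1 <= u)%nat -> P u -> P (2 * u)%nat) ->
  (forall u, (1 <= u)%nat -> P u -> P (u + 1)%nat -> P (2 * u + 1)%nat) ->
  forall t, P t.
Proof.
  intros H0 H1 He Ho t. induction t as [t IH] using lt_wf_ind.
  destruct (Nat.Even_or_Odd t) as [[u Hu]|[u Hu]]; subst t.
  - destruct u. simpl; auto. apply He. lia. apply IH; lia.
  - destruct u. simpl; auto. apply Ho. lia. apply IH; lia. apply IH; lia.
Qed.

Lemma Mo0_all t : Mo 0 t = 1.
Proof.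
  induction t using strong_ind_t.
  - rewrite Mo_zero. reflexivity.
  - pose proof (Mo_odd 0 0 ltac:(lia)) as H. simpl (2 * 0 + 1)%nat in H. simpl (0 + 1)%nat in H.
    rewrite TS_p1, TS_m1 in H by lia. rewrite Mo_zero in H. simpl pow in H. lra.
  - rewrite Mo_even. auto.
  - rewrite Mo_odd, TS_p1, TS_m1 by lia. rewrite IHt, IHt0. lra.
Qed.

Lemma Mo1_all t : Mo 1 t = 0.
Proof.
  induction t using strong_ind_t.
  - rewrite Mo_zero. simpl. ring.
  - pose proof (Mo_odd 1 0 ltac:(lia)) as H. simpl (2 * 0 + 1)%nat in H. simpl (0 + 1)%nat in H.
    rewrite TS_p1, TS_m1 in H by lia. rewrite !Mo0_all, Mo_zero in H. simpl pow in H. lra.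
  - rewrite Mo_even. auto.
  - rewrite Mo_odd, TS_p1, TS_m1 by lia. rewrite IHt, IHt0, !Mo0_all. lra.
Qed.

Lemma Mo2_one : Mo 2 1 = 2.
Proof.
  pose proof (Mo_odd 2 0 ltac:(lia)) as H. simpl (2 * 0 + 1)%nat in H. simpl (0 + 1)%nat in H.
  rewrite TS_p1, TS_m1 in H by lia. rewrite !Mo0_all, !Mo1_all, Mo_zero in H. simpl pow in H. lra.
Qed.

Lemma Mo2_odd u : Mo 2 (2 * u + 1)%nat = (Mo 2 u + Mo 2 (u + 1)%nat) / 2 + 1.
Proof. rewrite Mo_odd, TS_p1, TS_m1 by lia. rewrite !Mo0_all, !Mo1_all. lra. Qed.

Lemma Mo3_odd u : Mo 3 (2 * u + 1)%nat =
  (Mo 3 u + Mo 3 (u + 1)%nat) / 2 + 3 / 2 * (Mo 2 u - Mo 2 (u + 1)%nat).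
Proof. rewrite Mo_odd, TS_p1, TS_m1 by lia. rewrite !Mo0_all, !Mo1_all. lra. Qed.

Lemma D_eq t : D t = Mo 2 t - Mo 3 t / 3.
Proof.
  unfold D, kappa. simpl. rewrite !moment_eq, Mo1_all. field.
Qed.
Definition hh (t : nat) : R := 1 - (Mo 2 t - Mo 2 (t + 1)%nat) / 2.
Definition gg (t : nat) : R := D (t + 1)%nat - D t.

Lemma Mo3_one : Mo 3 1 = -6.
Proof.
  pose proof (Mo_odd 3 0 ltac:(lia)) as H. simpl (2 * 0 + 1)%nat in H. simpl (0 + 1)%nat in H.
  rewrite TS_p1, TS_m1 in H by lia. rewrite !Mo0_all, !Mo1_all, Mo2_one, !Mo_zero in H. simpl pow in H. lra.
Qed.

Lemma D_even t : D (2 * t)%nat = D t.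
Proof. rewrite !D_eq, !Mo_even. reflexivity. Qed.

Lemma D_odd t : D (2 * t + 1)%nat = D t + gg t / 2 + hh t.
Proof.
  unfold gg, hh. rewrite !D_eq, Mo2_odd, Mo3_odd. field.
Qed.

Lemma D_odd2 t : D (2 * t + 1 + 1)%nat = D (t + 1)%nat.
Proof. replace (2 * t + 1 + 1)%nat with (2 * (t + 1))%nat by lia. apply D_even. Qed.

Lemma hh_even t : hh (2 * t)%nat = 1 + hh t / 2.
Proof. unfold hh. rewrite Mo_even, Mo2_odd. field. Qed.

Lemma hh_odd t : hh (2 * t + 1)%nat = hh t / 2.
Proof.
  unfold hh. replace (2 * t + 1 + 1)%nat with (2 * (t + 1))%nat by lia.
  rewrite Mo_even, Mo2_odd. field.
Qed.

Lemma gg_even t : gg (2 * t)%nat = gg t / 2 + hh t.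
Proof. unfold gg at 1. replace (2 * t + 1)%nat with (2 * t + 1)%nat by reflexivity.
  rewrite D_odd, D_even. lra. Qed.

Lemma gg_odd t : gg (2 * t + 1)%nat = gg t / 2 - hh t.
Proof. unfold gg at 1. rewrite D_odd2, D_odd. unfold gg. lra. Qed.

Lemma hh_bounds t : 0 <= hh t <= 2.
Proof.
  induction t using strong_ind_t.
  - unfold hh. simpl (0 + 1)%nat. rewrite Mo2_one. replace (Mo 2 0) with 0.
    lra. rewrite Mo_zero. simpl. ring.
  - unfold hh. simpl (1 + 1)%nat. replace 2%nat with (2 * 1)%nat by reflexivity.
    rewrite Mo_even. lra.
  - rewrite hh_even. lra.
  - rewrite hh_odd. lra.
Qed.

Definition fut0 (g h : R) : R := Rmin 0 (g / 2 + h) - Rmin 0 g.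
Definition fut1 (g h : R) : R := g / 2 + h + Rmin 0 (g / 2 - h) - Rmin 0 g.

Lemma Rmin_shift x c : Rmin x (x + c) = x + Rmin 0 c.
Proof. unfold Rmin. destruct (Rle_dec x (x + c)); destruct (Rle_dec 0 c); lra. Qed.

Lemma mD_eq t : mD t = D t + Rmin 0 (gg t).
Proof. unfold mD, gg. rewrite <- Rmin_shift. f_equal. ring. Qed.

Lemma mD_even t : mD (2 * t)%nat = mD t + fut0 (gg t) (hh t).
Proof.
  rewrite !mD_eq, gg_even, D_even. unfold fut0. ring.
Qed.

Lemma mD_odd t : mD (2 * t + 1)%nat = mD t + fut1 (gg t) (hh t).
Proof.
  rewrite !mD_eq, gg_odd, D_odd. unfold fut1. ring.
Qed.

Lemma fut0_nonneg g h : 0 <= h -> 0 <= fut0 g h.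
Proof. intros. unfold fut0, Rmin. destruct (Rle_dec 0 (g/2+h)); destruct (Rle_dec 0 g); lra. Qed.

Lemma fut1_nonneg g h : 0 <= h -> 0 <= fut1 g h.
Proof. intros. unfold fut1, Rmin. destruct (Rle_dec 0 (g/2-h)); destruct (Rle_dec 0 g); lra. Qed.

Lemma key2 gb hb g h : 0 <= hb -> 3 / 2 <= h -> Rmin (gb / 4 + hb + 1) 1 <= g ->
  1 <= fut0 gb hb + fut1 g h.
Proof.
  intros H1 H2 H3. unfold fut0, fut1. unfold Rmin in *.
  destruct (Rle_dec (gb / 4 + hb + 1) 1); destruct (Rle_dec 0 (gb / 2 + hb));
  destruct (Rle_dec 0 gb); destruct (Rle_dec 0 (g / 2 - h)); destruct (Rle_dec 0 g); lra.
Qed.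

Lemma key1 (l : nat) g0 h0 : (1 <= l)%nat -> 1 <= h0 ->
  INR l / 2 ^ l <= fut1 g0 h0 + fut0 ((g0 - 2 * INR l * h0) / 2 ^ l) (h0 / 2 ^ l).
Proof.
  intros Hl Hh. set (P := 2 ^ l). set (L := INR l).
  assert (HP : 2 <= P).
  { unfold P. destruct l; [lia|]. simpl. pose proof (pow_R1_Rle 2 l ltac:(lra)). lra. }
  assert (HLP : L <= P).
  { unfold L, P. clear. induction l. simpl; lra. rewrite S_INR. simpl.
    destruct l. simpl. lra. assert (1 <= INR (S l)) by (apply (le_INR 1); lia). lra. }
  assert (HL : 1 <= L) by (unfold L; apply (le_INR 1); lia).
  set (q := L * h0). assert (Hq : L <= q) by (unfold q; nra).
  assert (Hq2 : h0 <= q) by (unfold q; nra).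
  assert (E1 : (g0 - 2 * L * h0) / P = (g0 - 2 * q) / P) by (unfold q; f_equal; ring).
  rewrite E1.
  apply Rmult_le_reg_r with P. lra.
  replace (L / P * P) with L by (field; lra).
  unfold fut1, fut0.
  set (g := (g0 - 2 * q) / P). set (h := h0 / P).
  assert (Eg : g * P = g0 - 2 * q) by (unfold g; field; lra).
  assert (Eh : h * P = h0) by (unfold h; field; lra).
  unfold Rmin.
  destruct (Rle_dec 0 (g0 / 2 - h0)); destruct (Rle_dec 0 g0);
  destruct (Rle_dec 0 (g / 2 + h)); destruct (Rle_dec 0 g); try nra.
Qed.
Definition push (b : bool) (r : list (bool * nat)) : list (bool * nat) :=
  match r with
  | (c, n) :: r' => if Bool.eqb b c then (c, S n) :: r' else (b, 1%nat) :: (c, n) :: r'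
  | [] => [(b, 1%nat)]
  end.

Lemma rle_cons b l : rle (b :: l) = push b (rle l).
Proof. reflexivity. Qed.

Lemma bits_double (t : nat) (b : bool) : (1 <= t)%nat -> bits (2 * t + (if b then 1 else 0))%nat = b :: bits t.
Proof.
  intros Ht. unfold bits.
  assert (E : Nat.log2 (2 * t + (if b then 1 else 0)) = S (Nat.log2 t)).
  { destruct b. apply Nat.log2_succ_double; lia. rewrite Nat.add_0_r. apply Nat.log2_double; lia. }
  rewrite E. rewrite seq0S. cbn [map]. f_equal.
  - destruct b. apply Nat.testbit_odd_0. rewrite Nat.add_0_r. apply Nat.testbit_even_0.
  - rewrite map_map. apply map_ext. intros i. destruct b.
    apply Nat.testbit_odd_succ; lia. rewrite Nat.add_0_r. apply Nat.testbit_even_succ; lia.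
Qed.

Lemma runs_double (t : nat) (b : bool) : (1 <= t)%nat -> runs (2 * t + (if b then 1 else 0))%nat = push b (runs t).
Proof. intros Ht. unfold runs. rewrite bits_double by auto. apply rle_cons. Qed.

Lemma runs_even t : (1 <= t)%nat -> runs (2 * t)%nat = push false (runs t).
Proof. intros Ht. rewrite <- (runs_double t false Ht). f_equal. lia. Qed.

Lemma runs_odd t : (1 <= t)%nat -> runs (2 * t + 1)%nat = push true (runs t).
Proof. intros Ht. apply (runs_double t true Ht). Qed.

Lemma runs_one : runs 1 = [(true, 1%nat)].
Proof. reflexivity. Qed.

Definition Kf (r : list (bool * nat)) : nat :=
  length (filter (fun p => negb (fst p) && Nat.leb 2 (snd p)) (removelast (tl r))).
Definition Lf (k : nat) (r : list (bool * nat)) : nat :=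
  length (filter (fun p => fst p && Nat.leb (snd p) k) r).

Lemma Kf_same c n m r : Kf ((c, m) :: r) = Kf ((c, n) :: r).
Proof. reflexivity. Qed.

Lemma Kf_single c n : Kf [(c, n)] = 0%nat.
Proof. reflexivity. Qed.

Lemma Kf_two b c n : Kf [(b, 1%nat); (c, n)] = 0%nat.
Proof. reflexivity. Qed.

Lemma Kf_new b c n r : r <> [] ->
  Kf ((b, 1%nat) :: (c, n) :: r) = ((if negb c && Nat.leb 2 n then 1 else 0) + Kf ((c, n) :: r))%nat.
Proof.
  intros Hr. unfold Kf. cbn [tl]. destruct r as [|p r]; [congruence|].
  change (removelast ((c, n) :: p :: r)) with ((c, n) :: removelast (p :: r)).
  cbn [filter fst snd]. destruct (negb c && Nat.leb 2 n); reflexivity.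
Qed.

Lemma Lf_cons k c n r : Lf k ((c, n) :: r) = ((if c && Nat.leb n k then 1 else 0) + Lf k r)%nat.
Proof. unfold Lf. cbn [filter fst snd]. destruct (c && Nat.leb n k); reflexivity. Qed.

Definition sh (k : nat) (w : R) (l : nat) : R := if Nat.leb l k then w else 0.

Lemma sh_INR k w l : w * INR (if true && Nat.leb l k then 1 else 0)%nat = sh k w l.
Proof. unfold sh. simpl. destruct (Nat.leb l k); simpl; ring. Qed.

Definition T (k : nat) (w : R) (t : nat) : R :=
  mD t - 4 - INR (Kf (runs t)) - w * INR (Lf k (runs t)) + 2 * w * INR (Kf (runs t)).

Definition Inv (k : nat) (w : R) (t : nat) : Prop :=
  (exists l, runs t = [(true, l)] /\ - w <= T k w t) \/
  (exists z r' sg gb hb, runs t = (false, z) :: r' /\ r' <> [] /\ 0 <= hb /\ - w <= sg /\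
     0 <= sg + fut0 gb hb /\ - w + sg + fut0 gb hb <= T k w t /\
     ((z = 1%nat /\ gg t = gb / 2 + hb /\ hh t = 1 + hb / 2) \/
      ((2 <= z)%nat /\ 3 / 2 <= hh t /\ Rmin (gb / 4 + hb + 1) 1 <= gg t))) \/
  (exists l r' tau g0 h0, runs t = (true, l) :: (false, 1%nat) :: r' /\ (1 <= l)%nat /\
     0 <= tau /\ 1 <= h0 /\ gg t = (g0 - 2 * INR l * h0) / 2 ^ l /\ hh t = h0 / 2 ^ l /\
     - w + tau - sh k w l + fut1 g0 h0 <= T k w t) \/
  (exists l z r', runs t = (true, l) :: (false, z) :: r' /\ (2 <= z)%nat /\
     - w + (w - sh k w l) <= T k w t).
Lemma INR_if (b : bool) : INR (if b then 1 else 0)%nat = if b then 1 else 0.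
Proof. destruct b; reflexivity. Qed.

Lemma T_unfold k w t : T k w t =
  mD t - 4 - INR (Kf (runs t)) - w * INR (Lf k (runs t)) + 2 * w * INR (Kf (runs t)).
Proof. reflexivity. Qed.

Ltac destr_leb := repeat match goal with
  | H : context [Nat.leb ?a ?b] |- _ =>
      let E := fresh "E" in destruct (Nat.leb a b) eqn:E; [apply Nat.leb_le in E | apply Nat.leb_gt in E]
  | |- context [Nat.leb ?a ?b] =>
      let E := fresh "E" in destruct (Nat.leb a b) eqn:E; [apply Nat.leb_le in E | apply Nat.leb_gt in E] end.

Ltac finT := rewrite ?plus_INR, ?INR_if in *; unfold sh in *;
  cbv delta [andb negb] beta iota in *; destr_leb; cbv beta iota in *;
  change (INR 0) with 0 in *; first [lia | lra].

Section Step.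
Variable k : nat.
Variable w : R.
Hypothesis Hk : (1 <= k)%nat.
Hypothesis Hw0 : 0 <= w.
Hypothesis Hwl : forall l, (1 <= l <= k)%nat -> w <= INR l / 2 ^ l.

Lemma sh_le l : 0 <= sh k w l <= w.
Proof. unfold sh. destruct (Nat.leb l k); lra. Qed.

Lemma sh_key l g0 h0 : (1 <= l)%nat -> 1 <= h0 ->
  sh k w l <= fut1 g0 h0 + fut0 ((g0 - 2 * INR l * h0) / 2 ^ l) (h0 / 2 ^ l).
Proof.
  intros Hl Hh. pose proof (key1 l g0 h0 Hl Hh). unfold sh.
  destruct (Nat.leb_spec l k).
  - pose proof (Hwl l ltac:(lia)). lra.
  - apply Rplus_le_le_0_compat. apply fut1_nonneg; lra.
    apply fut0_nonneg. apply Rdiv_le_0_compat; [lra|apply pow2_pos].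
Qed.

Lemma step0 t : (1 <= t)%nat -> Inv k w t -> Inv k w (2 * t)%nat.
Proof.
  intros Ht HI. pose proof (hh_bounds t) as Hh.
  pose proof (fut0_nonneg (gg t) (hh t) ltac:(lra)) as F0.
  assert (ET : T k w (2 * t)%nat = mD t + fut0 (gg t) (hh t) - 4 - INR (Kf (push false (runs t)))
             - w * INR (Lf k (push false (runs t))) + 2 * w * INR (Kf (push false (runs t)))).
  { rewrite T_unfold, runs_even, mD_even by auto. reflexivity. }
  pose proof (T_unfold k w t) as ET0.
  destruct HI as [[l [Hr HT]]|[[z [r' [sg [gb [hb [Hr [Hr' [Hhb [Hs1 [Hs2 [HT Hz]]]]]]]]]]]|
                  [[l [r' [tau [g0 [h0 [Hr [Hl [Htau [Hh0 [Hg [Hhe HT]]]]]]]]]]]|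
                   [l [z [r' [Hr [Hz HT]]]]]]]];
  rewrite Hr in ET, ET0; cbn [push Bool.eqb] in ET.
  -
    right; left. exists 1%nat, [(true, l)], 0, (gg t), (hh t).
    rewrite runs_even by auto. rewrite Hr. cbn [push Bool.eqb].
    repeat split; try lra. congruence.
    + rewrite ET0 in HT. rewrite ET. rewrite Kf_two, Kf_single in *. rewrite !Lf_cons in *. finT.
    + left. split; [reflexivity|]. rewrite gg_even, hh_even. lra.
  -
    right; left. exists (S z), r', sg, gb, hb.
    rewrite runs_even by auto. rewrite Hr. cbn [push Bool.eqb].
    repeat split; try lra; auto.
    + rewrite ET0 in HT. rewrite ET. rewrite (Kf_same false z (S z)). rewrite !Lf_cons in *. finT.
    + right. rewrite gg_even, hh_even. destruct Hz as [[-> [Hg1 Hh1]]|[Hz [Hh1 Hg1]]].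
      * split; [lia|]. split; [lra|]. rewrite Hg1, Hh1. unfold Rmin. destruct (Rle_dec _ _); lra.
      * split; [lia|]. split; [lra|].
        assert (Rmin (gb / 4 + hb + 1) 1 <= 1) by apply Rmin_r. lra.
  -
    right; left. exists 1%nat, ((true, l) :: (false, 1%nat) :: r'), (tau - sh k w l + fut1 g0 h0), (gg t), (hh t).
    rewrite runs_even by auto. rewrite Hr. cbn [push Bool.eqb].
    pose proof (sh_le l). pose proof (fut1_nonneg g0 h0 ltac:(lra)).
    pose proof (sh_key l g0 h0 Hl Hh0). rewrite <- Hg, <- Hhe in *.
    repeat split; try lra. congruence.
    + rewrite ET0 in HT. rewrite ET. rewrite Kf_new by congruence. rewrite !Lf_cons in *. finT.
    + left. split; [reflexivity|]. rewrite gg_even, hh_even. lra.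
  -
    right; left. exists 1%nat, ((true, l) :: (false, z) :: r'), (w - sh k w l), (gg t), (hh t).
    rewrite runs_even by auto. rewrite Hr. cbn [push Bool.eqb].
    pose proof (sh_le l).
    repeat split; try lra. congruence.
    + rewrite ET0 in HT. rewrite ET. rewrite Kf_new by congruence. rewrite !Lf_cons in *. finT.
    + left. split; [reflexivity|]. rewrite gg_even, hh_even. lra.
Qed.
Lemma step1 t : (1 <= t)%nat -> Inv k w t -> Inv k w (2 * t + 1)%nat.
Proof.
  intros Ht HI. pose proof (hh_bounds t) as Hh.
  pose proof (fut1_nonneg (gg t) (hh t) ltac:(lra)) as F1.
  assert (ET : T k w (2 * t + 1)%nat = mD t + fut1 (gg t) (hh t) - 4 - INR (Kf (push true (runs t)))
             - w * INR (Lf k (push true (runs t))) + 2 * w * INR (Kf (push true (runs t)))).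
  { rewrite T_unfold, runs_odd, mD_odd by auto. reflexivity. }
  pose proof (T_unfold k w t) as ET0.
  destruct HI as [[l [Hr HT]]|[[z [r' [sg [gb [hb [Hr [Hr' [Hhb [Hs1 [Hs2 [HT Hz]]]]]]]]]]]|
                  [[l [r' [tau [g0 [h0 [Hr [Hl [Htau [Hh0 [Hg [Hhe HT]]]]]]]]]]]|
                   [l [z [r' [Hr [Hz HT]]]]]]]];
  rewrite Hr in ET, ET0; cbn [push Bool.eqb] in ET.
  - left. exists (S l). rewrite runs_odd by auto. rewrite Hr. cbn [push Bool.eqb].
    split; [reflexivity|].
    rewrite ET0 in HT. rewrite ET. rewrite !Kf_single in *. rewrite !Lf_cons in *. finT.
  - destruct Hz as [[-> [Hg1 Hh1]]|[Hz [Hh1 Hg1]]].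
    + right; right; left. exists 1%nat, r', (sg + fut0 gb hb), (gg t), (hh t).
      rewrite runs_odd by auto. rewrite Hr. cbn [push Bool.eqb].
      repeat split; try lra; auto.
      * rewrite gg_odd. simpl pow. rewrite Rmult_1_r. change (INR 1) with 1. field.
      * rewrite hh_odd. simpl pow. rewrite Rmult_1_r. reflexivity.
      * rewrite ET0 in HT. rewrite ET. rewrite Kf_new by auto. rewrite !Lf_cons in *. finT.
    + right; right; right. exists 1%nat, z, r'.
      rewrite runs_odd by auto. rewrite Hr. cbn [push Bool.eqb].
      repeat split; auto.
      pose proof (key2 gb hb (gg t) (hh t) Hhb Hh1 Hg1).
      rewrite ET0 in HT. rewrite ET. rewrite Kf_new by auto. rewrite !Lf_cons in *.
      assert (Hz2 : Nat.leb 2 z = true) by (apply Nat.leb_le; auto). rewrite Hz2. finT.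
  - right; right; left. exists (S l), r', tau, g0, h0.
    rewrite runs_odd by auto. rewrite Hr. cbn [push Bool.eqb].
    repeat split; try lra; auto.
    + rewrite gg_odd, Hg, Hhe. rewrite S_INR. simpl pow. field. apply pow_nonzero. lra.
    + rewrite hh_odd, Hhe. simpl pow. field. apply pow_nonzero. lra.
    + rewrite ET0 in HT. rewrite ET. rewrite (Kf_same true l (S l)) in *. rewrite !Lf_cons in *. finT.
  - right; right; right. exists (S l), z, r'.
    rewrite runs_odd by auto. rewrite Hr. cbn [push Bool.eqb].
    repeat split; auto.
    rewrite ET0 in HT. rewrite ET. rewrite (Kf_same true l (S l)) in *. rewrite !Lf_cons in *. finT.
Qed.

Lemma Inv_one : Inv k w 1.
Proof.
  left. exists 1%nat. split. apply runs_one.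
  rewrite T_unfold, runs_one. rewrite Kf_single, !Lf_cons.
  unfold Lf. cbn [filter length].
  assert (HmD : mD 1 = 4).
  { unfold mD. rewrite !D_eq. replace (1 + 1)%nat with (2 * 1)%nat by reflexivity.
    rewrite !Mo_even, Mo2_one, Mo3_one. unfold Rmin. destruct (Rle_dec _ _); lra. }
  rewrite HmD. finT.
Qed.

Lemma Inv_all t : (1 <= t)%nat -> Inv k w t.
Proof.
  induction t as [t IH] using lt_wf_ind. intros Ht.
  destruct (Nat.Even_or_Odd t) as [[u Hu]|[u Hu]]; subst t.
  - apply step0. lia. apply IH; lia.
  - destruct u. apply Inv_one. apply step1. lia. apply IH; lia.
Qed.

Lemma T_lower t : (1 <= t)%nat -> - 2 * w <= T k w t.
Proof.
  intros Ht. destruct (Inv_all t Ht) as [[l [Hr HT]]|[[z [r' [sg [gb [hb [Hr [Hr' [Hhb [Hs1 [Hs2 [HT Hz]]]]]]]]]]]|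
                  [[l [r' [tau [g0 [h0 [Hr [Hl [Htau [Hh0 [Hg [Hhe HT]]]]]]]]]]]|
                   [l [z [r' [Hr [Hz HT]]]]]]]].
  - lra.
  - lra.
  - pose proof (sh_le l). pose proof (fut1_nonneg g0 h0 ltac:(lra)). lra.
  - pose proof (sh_le l). lra.
Qed.
End Step.
Lemma ratio_mono (l d : nat) : (1 <= l)%nat -> INR (l + d) / 2 ^ (l + d) <= INR l / 2 ^ l.
Proof.
  intros Hl. induction d as [|d IH].
  - rewrite Nat.add_0_r. lra.
  - eapply Rle_trans; [|exact IH].
    replace (l + S d)%nat with (S (l + d)) by lia.
    rewrite S_INR. simpl pow. pose proof (pow2_pos (l + d)).
    assert (1 <= INR (l + d)) by (apply (le_INR 1); lia).
    apply Rmult_le_reg_r with (2 * 2 ^ (l + d)). lra.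
    replace ((INR (l + d) + 1) / (2 * 2 ^ (l + d)) * (2 * 2 ^ (l + d))) with (INR (l + d) + 1) by (field; lra).
    replace (INR (l + d) / 2 ^ (l + d) * (2 * 2 ^ (l + d))) with (2 * INR (l + d)) by (field; lra).
    lra.
Qed.

Lemma ratio_mono' (l k : nat) : (1 <= l <= k)%nat -> INR k / 2 ^ k <= INR l / 2 ^ l.
Proof.
  intros H. replace k with (l + (k - l))%nat by lia. apply ratio_mono. lia.
Qed.

Lemma bound_w0 k t : (1 <= k)%nat -> (1 <= t)%nat ->
  4 + INR (innerZeroBlocks2 t) <= mD t.
Proof.
  intros Hk Ht. pose proof (T_lower k 0 Hk ltac:(lra)) as H.
  assert (Hw : forall l, (1 <= l <= k)%nat -> 0 <= INR l / 2 ^ l).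
  { intros l _. apply Rdiv_le_0_compat. apply pos_INR. apply pow2_pos. }
  specialize (H Hw t Ht). unfold T in H. change (innerZeroBlocks2 t) with (Kf (runs t)). lra.
Qed.

Lemma bound_wc k t : (1 <= k)%nat -> (1 <= t)%nat ->
  4 + INR (innerZeroBlocks2 t)
  + (INR (oneBlocksLe k t) - 2 * INR (innerZeroBlocks2 t) - 2) * (INR k / 2 ^ k) <= mD t.
Proof.
  intros Hk Ht. pose proof (pow2_pos k) as Hp.
  assert (Hc : 0 <= INR k / 2 ^ k) by (apply Rdiv_le_0_compat; [apply pos_INR|lra]).
  pose proof (T_lower k (INR k / 2 ^ k) Hk Hc (fun l Hl => ratio_mono' l k Hl) t Ht) as H.
  unfold T in H. change (innerZeroBlocks2 t) with (Kf (runs t)). change (oneBlocksLe k t) with (Lf k (runs t)).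
  lra.
Qed.

Theorem corollary2p13 :
  (forall (k t : nat), (2 <= k)%nat -> (1 <= t)%nat ->
     let K := innerZeroBlocks2 t in
     let L := oneBlocksLe k t in
     mD t >= 4 + INR K
             + IZR (Z.max 0 ((Z.of_nat L - 2 * Z.of_nat K - 1) / 2)%Z)
               * (INR k / 2 ^ k))
  /\
  (forall (D0 k : nat), (2 <= D0)%nat -> (2 <= k)%nat ->
     exists B : nat, forall t : nat, (1 <= t)%nat -> D t <= INR D0 ->
       (innerZeroBlocks2 t <= B)%nat /\ (oneBlocksLe k t <= B)%nat).
Proof.
  split.
  - intros k t Hk Ht K L.
    pose proof (bound_w0 k t ltac:(lia) Ht) as H0.
    pose proof (bound_wc k t ltac:(lia) Ht) as H1. fold K L in H0, H1.
    pose proof (pow2_pos k).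
    assert (Hc : 0 <= INR k / 2 ^ k) by (apply Rdiv_le_0_compat; [apply pos_INR|lra]).
    set (q := ((Z.of_nat L - 2 * Z.of_nat K - 1) / 2)%Z).
    destruct (Z_le_gt_dec q 0) as [Hq|Hq].
    + rewrite Z.max_l by lia. simpl IZR. lra.
    + rewrite Z.max_r by lia.
      assert (Hq2 : (q <= Z.of_nat L - 2 * Z.of_nat K - 2)%Z).
      { unfold q in *. pose proof (Z.mul_div_le (Z.of_nat L - 2 * Z.of_nat K - 1) 2 ltac:(lia)). lia. }
      assert (Hq3 : IZR q <= INR L - 2 * INR K - 2).
      { apply IZR_le in Hq2. rewrite !minus_IZR, mult_IZR, <- !INR_IZR_INZ in Hq2. exact Hq2. }
      assert (Hq4 : IZR q * (INR k / 2 ^ k) <= (INR L - 2 * INR K - 2) * (INR k / 2 ^ k)).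
      { apply Rmult_le_compat_r; auto. }
      lra.
  - intros D0 k HD0 Hk. exists (D0 * 2 ^ k + 2 * D0 + 2)%nat. intros t Ht HD.
    pose proof (bound_w0 k t ltac:(lia) Ht) as H0.
    pose proof (bound_wc k t ltac:(lia) Ht) as H1.
    assert (Hm : mD t <= INR D0) by (unfold mD; eapply Rle_trans; [apply Rmin_l|exact HD]).
    assert (HK : (innerZeroBlocks2 t <= D0)%nat).
    { apply INR_le. lra. }
    split.
    + lia.
    + set (K := innerZeroBlocks2 t) in *. set (L := oneBlocksLe k t) in *.
      destruct (le_lt_dec L (2 * K + 2)) as [HL|HL]. lia.
      apply INR_le. rewrite !plus_INR, !mult_INR, pow_INR.
      assert (E2 : INR 2 = 2) by reflexivity. rewrite E2.
      pose proof (pow2_pos k).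
      assert (HLK : 0 < INR L - 2 * INR K - 2).
      { apply lt_INR in HL. rewrite plus_INR, mult_INR in HL. rewrite E2 in HL. lra. }
      assert (Hk1 : 1 <= INR k) by (apply (le_INR 1); lia).
      assert (HKD : INR K <= INR D0) by (apply le_INR; auto).
      pose proof (pos_INR K).
      assert (Hx : (INR L - 2 * INR K - 2) * (INR k / 2 ^ k) <= INR D0) by lra.
      assert (Hy : (INR L - 2 * INR K - 2) / 2 ^ k <= INR D0).
      { eapply Rle_trans; [|exact Hx]. unfold Rdiv.
        apply Rmult_le_compat_l; [lra|].
        assert (0 < / 2 ^ k) by (apply Rinv_0_lt_compat; lra). nra. }
      assert (Hz : INR L - 2 * INR K - 2 <= INR D0 * 2 ^ k).
      { apply Rmult_le_reg_r with (/ 2 ^ k). apply Rinv_0_lt_compat; lra.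
        rewrite Rmult_assoc, Rinv_r, Rmult_1_r by lra. exact Hy. }
      lra.
Qed.
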